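(* Let $m\ge 1$ be an odd integer divisible by $3$. Then for every $n\in\mathbb{N}=\mathbb{Z}_{\ge 0}$, the friendship graph $F_n$ is $\mathbb{Z}_m$-cordial.
   Context: Graphs are finite, simple and undirected. For $n\in\mathbb{N}$, the friendship graph $F_n$ is the union of $n$ copies of the triangle $C_3$ joined at a single common (central) vertex (so $F_0$ is a single vertex). For an abelian group $A$ and a graph $G=(V,E)$, a vertex labeling $\ell:V\to A$ induces an edge labeling $\ell(\{v_1,v_2\})=\ell(v_1)+\ell(v_2)$. Let $f_V(a)=|\{v\in V:\ell(v)=a\}|$ and $f_E(a)=|\{e\in E:\ell(e)=a\}|$. The labeling is $A$-cordial if $|f_V(a_1)-f_V(a_2)|\le 1$ and $|f_E(a_1)-f_E(a_2)|\le 1$ for all $a_1,a_2\in A$; $G$ is $A$-cordial if it admits an $A$-cordial labeling. *)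

(* Defs.v *)
From mathcomp Require Import all_boot all_order all_algebra.
Set Implicit Arguments. Unset Strict Implicit. Unset Printing Implicit Defensive.
Import GRing.Theory.

(* A simple graph: vertex finType V with a symmetric irreflexive relation. *)
Definition edges (V : finType) (adj : rel V) : {set {set V}} :=
  [set e : {set V} | [exists u : V, exists v : V, adj u v && (e == [set u; v])]].

Section Cordial.
Variables (A : finZmodType) (V : finType) (adj : rel V).

Definition fV (l : V -> A) (a : A) : nat := #|[set v : V | l v == a]|.

Definition fE (l : V -> A) (a : A) : nat :=
  #|[set e in edges adj | (\sum_(v in e) l v)%R == a]|.

Definition cordial_labeling (l : V -> A) : Prop :=
  forall a1 a2 : A,
    (fV l a1 <= (fV l a2).+1)%N /\ (fV l a2 <= (fV l a1).+1)%N /\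
    (fE l a1 <= (fE l a2).+1)%N /\ (fE l a2 <= (fE l a1).+1)%N.

Definition is_cordial : Prop := exists l : V -> A, cordial_labeling l.
End Cordial.

(* Friendship graph F_n on vertices 0..2n: 0 is the centre, triangle i      *)
(* (i < n) is {0, 2i+1, 2i+2}.                                              *)
Definition friendship_adj (n : nat) : rel 'I_(n.*2.+1) :=
  fun u v => (u != v) &&
    [|| (val u == 0)%N, (val v == 0)%N |
        [&& (0 < val u)%N, (0 < val v)%N & ((val u).-1./2 == (val v).-1./2)%N]].

Arguments friendship_adj n : clear implicits.

Lemma friendship_adj_sym (n : nat) : symmetric (friendship_adj n).
Proof.
move=> u v; rewrite /friendship_adj eq_sym; congr (_ && _).
by case: (val u == 0)%N; case: (val v == 0)%N => //=; rewrite andbCA eq_sym.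
Qed.

Lemma friendship_adj_irrefl (n : nat) : irreflexive (friendship_adj n).
Proof. by move=> u; rewrite /friendship_adj eqxx. Qed.

(* Main.v *)
Require Import Defs.
From mathcomp Require Import all_boot all_order all_algebra.
From mathcomp Require Import zify.
Set Warnings "-notation-overridden -ambiguous-paths".
Set Implicit Arguments. Unset Strict Implicit. Unset Printing Implicit Defensive.
Local Open Scope nat_scope.


Lemma mod2inv (M c a x : nat) : odd M ->
  ((2 * x + c) %% M == a %% M) =
  (x %% M == ((a + (M - 1) * c) * (M.+1)./2) %% M).
Proof.
move=> oM.
have M0 : 0 < M by case: M oM.
have h2 : 2 * (M.+1)./2 = M.+1.
  rewrite -[in RHS](odd_double_half M.+1) /= oM /= add0n.
  by rewrite -muln2 mulnC.
set h := (M.+1)./2 in h2 *.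
set K := (a + (M - 1) * c) * h.
have stepA : forall y, y %% M = (y * M.+1) %% M.
  by move=> y; rewrite mulnSr modnMDl.
have stepB : forall y, y * M.+1 = (2 * y) * h.
  by move=> y; rewrite -h2 mulnCA mulnA.
apply/idP/idP.
- move=> /eqP H.
  have H2 : (2 * x) %% M = (a + (M - 1) * c) %% M.
    have E : 2 * x + c * M = (2 * x + c) + (M - 1) * c.
      have -> : c * M = c + (M - 1) * c.
        by case: (M) M0 => // M' _; rewrite subSS subn0 mulnC mulSn.
      by rewrite addnA.
    by rewrite -(modnMDl c (2 * x)) addnC E -modnDml H modnDml.
  by rewrite stepA stepB -modnMml H2 modnMml.
- move=> /eqP H.
  rewrite -modnDml -modnMmr H modnMmr modnDml.
  have e1 : (M - 1) * c + c = M * c.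
    by case: (M) M0 => // M' _; rewrite subSS subn0 mulSn addnC.
  have E : 2 * K + c = (a + (M - 1) * c + c) * M + a.
    rewrite /K mulnCA h2 mulnS.
    set A := a + (M - 1) * c.
    have eA : A + c = a + M * c by rewrite /A -addnA e1.
    rewrite eA; nia.
  by rewrite E modnMDl.
Qed.

Definition ct (t q : nat) (s : seq nat) := count (fun x => x %% t == q) s.

Lemma ctE t q s : ct t q s = count_mem q (map (modn^~ t) s).
Proof. by rewrite /ct count_map; apply: eq_count => x /=; rewrite eq_sym. Qed.

Lemma ct_cat t q s1 s2 : ct t q (s1 ++ s2) = ct t q s1 + ct t q s2.
Proof. exact: count_cat. Qed.

Lemma ct_perm t q s1 s2 : perm_eq s1 s2 -> ct t q s1 = ct t q s2.
Proof. by move=> /permP E; rewrite /ct E. Qed.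

Lemma ct_map21 t c q s : odd t -> q < t ->
  ct t q (map (fun x => 2 * x + c) s) = ct t (((q + (t - 1) * c) * (t.+1)./2) %% t) s.
Proof.
move=> ot qt; rewrite /ct count_map; apply: eq_count => x /=.
by rewrite -{1}(modn_small qt) mod2inv.
Qed.

Lemma ct_eq_map t q (f g : nat -> nat) s :
  {in s, forall x, f x %% t = g x %% t} -> ct t q (map f s) = ct t q (map g s).
Proof.
by move=> H; rewrite /ct !count_map; apply: eq_in_count => x /H /= ->.
Qed.

Definition tight t N s := forall q, q < t -> N %/ t <= ct t q s <= (N + t.-1) %/ t.

Lemma tight_ct t N s s' : (forall q, q < t -> ct t q s = ct t q s') -> tight t N s' -> tight t N s.
Proof. by move=> E H q qt; rewrite E //; apply: H. Qed.

Lemma tight_perm t N s s' : perm_eq s s' -> tight t N s' -> tight t N s.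
Proof. by move=> P; apply: tight_ct => q _; apply: ct_perm. Qed.

Lemma tight_map21 t c N s : odd t -> tight t N s -> tight t N (map (fun x => 2 * x + c) s).
Proof.
move=> ot H q qt; rewrite ct_map21 //; apply: H.
by rewrite ltn_pmod //; case: (t) qt.
Qed.

Lemma uniq_mod_iota t x N : N <= t -> uniq (map (modn^~ t) (iota x N)).
Proof.
move=> Nt; rewrite map_inj_in_uniq ?iota_uniq // => y z.
rewrite !mem_iota => /andP [y1 y2] /andP [z1 z2] /= E.
wlog yz : y z y1 y2 z1 z2 E / y <= z.
  move=> W; case: (leqP y z) => [|/ltnW] h; first exact: W.
  by apply/esym/W.
have -> : z = y + (z - y) by rewrite subnKC.
have d0 : (z - y) %% t = 0.
  move: E; rewrite -{1}[y]addn0 -{1}(subnKC yz) => /eqP.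
  by rewrite eqn_modDl mod0n => /eqP.
have dl : z - y < t by lia.
by move: d0; rewrite modn_small // => ->; rewrite addn0.
Qed.

Lemma ct_iota_le1 t q x N : N <= t -> ct t q (iota x N) <= 1.
Proof.
move=> Nt; rewrite ctE count_uniq_mem ?uniq_mod_iota //.
by case: (_ \in _).
Qed.

Lemma mem_mod_full t q s : 0 < t -> q < t -> uniq (map (modn^~ t) s) -> t <= size s ->
  q \in map (modn^~ t) s.
Proof.
move=> t0 qt U sz.
have S : {subset map (modn^~ t) s <= iota 0 t}.
  by move=> y /mapP [z _ ->]; rewrite mem_iota add0n ltn_pmod.
have := uniq_min_size U S; rewrite size_iota size_map => /(_ sz) [_ E].
by rewrite E mem_iota.
Qed.

Lemma ct_iota_full t q x : 0 < t -> q < t -> ct t q (iota x t) = 1.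
Proof.
move=> t0 qt; rewrite ctE count_uniq_mem ?uniq_mod_iota //.
by rewrite mem_mod_full ?uniq_mod_iota ?size_iota.
Qed.

Lemma ct_iota_mul t q x k r : 0 < t -> q < t ->
  ct t q (iota x (k * t + r)) = k + ct t q (iota (x + k * t) r).
Proof.
move=> t0 qt; elim: k x => [|k IH] x; first by rewrite mul0n add0n addn0.
rewrite mulSn -addnA iotaD ct_cat ct_iota_full // IH.
by rewrite addnA add1n; congr (_ + ct _ _ (iota _ _)); lia.
Qed.

Lemma divn_ceil N t : 0 < t -> 0 < N %% t -> (N + t.-1) %/ t = (N %/ t).+1.
Proof.
move=> t0 r0.
have -> : N + t.-1 = (N %/ t).+1 * t + (N %% t).-1.
  have e := divn_eq N t; move: e r0 t0.
  set a := N %/ t; set b := N %% t; rewrite mulSn.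
  move=> e r0 t0; rewrite {1}e.
  case: (b) r0 => // b' _; case: (t) t0 => // t' _ /=; lia.
rewrite divnMDl // (@divn_small (N %% t).-1) ?addn0 //.
exact: leq_ltn_trans (leq_pred _) (ltn_pmod N t0).
Qed.

Lemma tight_iota t x N : 0 < t -> tight t N (iota x N).
Proof.
move=> t0 q qt.
have E : ct t q (iota x N) = N %/ t + ct t q (iota (x + N %/ t * t) (N %% t)).
  by rewrite {1}(divn_eq N t) ct_iota_mul.
rewrite E.
have le1 := @ct_iota_le1 t q (x + N %/ t * t) (N %% t) (ltnW (ltn_pmod N t0)).
case: (posnP (N %% t)) => [r0|r0].
  rewrite r0 /= addn0 leqnn /=.
  by rewrite leq_div2r // leq_addr.
rewrite divn_ceil // leq_addr /=.
by rewrite -addn1 leq_add2l.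
Qed.

Lemma div_self_ceil t : 0 < t -> (t + t.-1) %/ t = 1.
Proof.
move=> t0; rewrite -{1}(mul1n t) divnMDl // divn_small ?addn0 //.
by case: t t0.
Qed.

Lemma tight_full_ct t f q : 0 < t -> tight t t f -> q < t -> ct t q f = 1.
Proof.
move=> t0 H qt; have := H q qt; rewrite divnn t0 div_self_ceil //.
by move=> /andP [a b]; apply/eqP; rewrite eqn_leq a b.
Qed.

Lemma tight_cat_full t N s f : 0 < t -> tight t N s -> tight t t f ->
  tight t (N + t) (s ++ f).
Proof.
move=> t0 Hs Hf q qt; rewrite ct_cat (@tight_full_ct t f q) //.
have e1 : (N + t) %/ t = (N %/ t).+1.
  by rewrite -{1}(mul1n t) addnC divnMDl // add1n.
have e2 : (N + t + t.-1) %/ t = ((N + t.-1) %/ t).+1.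
  by rewrite -addnA (addnC t) addnA -{2}(mul1n t) addnC divnMDl // add1n.
by rewrite e1 e2 !addn1 !ltnS; apply: Hs.
Qed.

Lemma tight_le1 t s : 0 < t -> (forall q, q < t -> ct t q s <= 1) -> size s <= t ->
  tight t (size s) s.
Proof.
move=> t0 H sz q qt.
case: (ltnP (size s) t) => [lt|ge].
  rewrite divn_small // leq0n /=.
  case: (posnP (size s)) => [s0|s0].
    by move/eqP: s0; rewrite size_eq0 => /eqP ->.
  by rewrite divn_ceil ?modn_small // divn_small // H.
have st : size s = t by apply/eqP; rewrite eqn_leq sz ge.
rewrite st divnn t0 div_self_ceil // H // andbT.
have U : uniq (map (modn^~ t) s).
  apply: count_mem_uniq => y.
  case: (ltnP y t) => yt.
    have := H y yt; rewrite ctE -has_pred1 has_count.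
    by case: (count_mem y _) => [|[|]].
  have nin : y \notin map (modn^~ t) s.
    by apply/mapP => [[z _ zE]]; move: yt; rewrite zE leqNgt ltn_pmod.
  by rewrite (negbTE nin); apply/count_memPn.
by rewrite ctE count_uniq_mem // mem_mod_full // st.
Qed.

Definition mbal m s := forall a b, a < m -> b < m -> ct m a s <= (ct m b s).+1.

Lemma mbal_perm m s s' : perm_eq s s' -> mbal m s -> mbal m s'.
Proof. by move=> P H a b am bm; rewrite -!(ct_perm _ _ P); apply: H. Qed.

Lemma mbal_full m s f k : (forall a, a < m -> ct m a f = k) -> mbal m s -> mbal m (f ++ s).
Proof. by move=> E H a b am bm; rewrite !ct_cat !E // -addnS leq_add2l; apply: H. Qed.

Lemma mod3t t h e : e < 3 -> (3 * h + e) %% (3 * t) = 3 * (h %% t) + e.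
Proof.
move=> e3.
case: (posnP t) => [->|t0]; first by rewrite muln0 modn0 modn0.
rewrite {1}(divn_eq h t) mulnDr mulnA (mulnC 3 (h %/ t)) -mulnA -addnA modnMDl.
rewrite modn_small //.
have := ltn_pmod h t0; lia.
Qed.

Lemma ct_map3 t a e s : e < 3 -> a < 3 * t ->
  ct (3 * t) a (map (fun h => 3 * h + e) s) = if e == a %% 3 then ct t (a %/ 3) s else 0.
Proof.
move=> e3 at3; rewrite /ct count_map.
have ea : a = 3 * (a %/ 3) + a %% 3 by rewrite mulnC -divn_eq.
have a3 : a %% 3 < 3 by rewrite ltn_mod.
case: ifP => E.
  apply: eq_count => h /=; rewrite mod3t //.
  move/eqP: E => E; apply/eqP/eqP => H; lia.
apply/eqP; rewrite -leqn0 leqNgt -has_count; apply/hasPn => h _ /=.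
rewrite mod3t //; apply/eqP => H; move/negbT: E => /eqP; lia.
Qed.

Lemma mbal_classes t N0 N1 N2 s0 s1 s2 : 0 < t ->
  tight t N0 s0 -> tight t N1 s1 -> tight t N2 s2 ->
  N0 <= N1.+1 -> N1 <= N0.+1 -> N0 <= N2.+1 -> N2 <= N0.+1 -> N1 <= N2.+1 -> N2 <= N1.+1 ->
  mbal (3 * t) (map (fun h => 3 * h + 0) s0 ++ map (fun h => 3 * h + 1) s1 ++
                map (fun h => 3 * h + 2) s2).
Proof.
move=> t0 H0 H1 H2 c01 c10 c02 c20 c12 c21.
set L := _ ++ _.
have B : forall a, a < 3 * t -> exists2 N : nat, N \in [:: N0; N1; N2] &
    N %/ t <= ct (3 * t) a L <= (N + t.-1) %/ t.
  move=> a at3; have q3 : a %/ 3 < t by rewrite ltn_divLR // mulnC.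
  rewrite /L !ct_cat !ct_map3 //.
  have : a %% 3 < 3 by rewrite ltn_mod.
  case: (a %% 3) => [|[|[|//]]] _ /=.
  - by exists N0; rewrite ?inE ?eqxx // !addn0; apply: H0.
  - by exists N1; rewrite ?inE ?eqxx ?orbT // add0n addn0; apply: H1.
  - by exists N2; rewrite ?inE ?eqxx ?orbT // !add0n; apply: H2.
move=> a b am bm.
have [Na Na_in /andP [_ ha]] := B a am.
have [Nb Nb_in /andP [hb _]] := B b bm.
have cmp : Na <= Nb.+1.
  move: Na_in Nb_in; rewrite !inE => /or3P [] /eqP -> /or3P [] /eqP -> //.
apply: (leq_trans ha); apply: (@leq_trans ((Nb + t) %/ t)).
  apply: leq_div2r; move: cmp; rewrite -(prednK t0) /=; lia.
by rewrite -{1}(mul1n t) addnC divnMDl // add1n ltnS.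
Qed.

Definition lab (T : seq (nat * nat)) (k : nat) : nat :=
  if k is k'.+1 then
    (if odd k' then (nth (0,0) T k'./2).2 else (nth (0,0) T k'./2).1)
  else 0.

Definition Vlist (T : seq (nat * nat)) := 0 :: flatten [seq [:: p.1; p.2] | p <- T].
Definition Elist (T : seq (nat * nat)) := flatten [seq [:: p.1; p.2; p.1 + p.2] | p <- T].

Lemma lab_odd T i : lab T (2 * i + 1) = (nth (0,0) T i).1.
Proof. by rewrite addn1 /= mul2n odd_double doubleK. Qed.

Lemma lab_even T i : lab T (2 * i + 2) = (nth (0,0) T i).2.
Proof.
rewrite addn2 /= mul2n.
by rewrite odd_double /= uphalf_double.
Qed.

Lemma map_lab_aux T j k :
  map (lab T) (iota (2 * j + 1) (2 * k)) =
  flatten [seq [:: (nth (0,0) T i).1; (nth (0,0) T i).2] | i <- iota j k].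
Proof.
elim: k j => [|k IH] j; first by rewrite muln0.
rewrite mulnS iotaD map_cat.
have -> : iota (2 * j + 1) 2 = [:: 2 * j + 1; 2 * j + 2] by rewrite /= addn1 addn2.
rewrite [map _ [:: _; _]]/= lab_odd lab_even.
have -> : 2 * j + 1 + 2 = 2 * j.+1 + 1 by rewrite mulnS; lia.
by rewrite IH.
Qed.

Lemma map_lab T : map (lab T) (iota 0 (2 * size T).+1) = Vlist T.
Proof.
rewrite /Vlist /= -[1]/(2 * 0 + 1) map_lab_aux.
congr (_ :: _); congr flatten.
by rewrite -[in RHS](mkseq_nth (0,0) T) /mkseq -map_comp.
Qed.

Lemma card_count_ord N (P : nat -> bool) :
  #|[set v : 'I_N | P (val v)]| = count P (iota 0 N).
Proof.
rewrite -sum1dep_card -(big_mkord (fun i => P i) (fun _ => 1)).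
by rewrite sum1_count /index_iota subn0.
Qed.

Lemma Zp_nat_eq m (k : nat) (a : 'Z_m) : 1 < m -> ((k%:R)%R == a :> 'Z_m) = (k %% m == a).
Proof. by move=> m1; rewrite -val_eqE /= val_Zp_nat. Qed.

Definition labZ m n T (v : 'I_(n.*2.+1)) : 'Z_m := ((lab T v)%:R)%R.

Lemma fV_lab m n T (a : 'Z_m) : 1 < m -> size T = n ->
  fV (@labZ m n T) a = ct m a (Vlist T).
Proof.
move=> m1 sT; rewrite /fV /labZ.
have -> : [set v : 'I_(n.*2.+1) | ((lab T v)%:R)%R == a] = [set v : 'I_(n.*2.+1) | lab T v %% m == a].
  by apply: eq_finset => v; rewrite Zp_nat_eq.
rewrite (card_count_ord (n.*2.+1) (fun k => lab T k %% m == a)).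
by rewrite -mul2n -sT -map_lab /ct count_map.
Qed.

Section Edges.
Variable n : nat.
Notation V := 'I_(n.*2.+1).

Definition ef (x : 'I_n * 'I_3) : {set V} :=
  let i := val x.1 in
  if val x.2 == 0 then [set ord0; inord (2 * i + 1)]
  else if val x.2 == 1 then [set ord0; inord (2 * i + 2)]
  else [set inord (2 * i + 1); inord (2 * i + 2)].

Lemma inord_val k : k <= n.*2 -> val (inord k : V) = k.
Proof. by move=> h; apply: inordK; rewrite ltnS. Qed.

Lemma vert_dec_nat k : 0 < k -> k <= 2 * n -> (k.-1./2 < n) /\ k = 2 * k.-1./2 + 1 + odd k.-1.
Proof.
move=> k0 kl; split.
  rewrite ltn_half_double -mul2n; lia.
have := odd_double_half k.-1; rewrite -mul2n; lia.
Qed.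

Lemma vert_dec (w : V) : 0 < val w ->
  ((val w).-1./2 < n) /\ val w = 2 * (val w).-1./2 + 1 + odd (val w).-1.
Proof.
move=> w0; apply: vert_dec_nat => //.
by rewrite mul2n -ltnS; exact: ltn_ord.
Qed.

Lemma bnd1 i : i < n -> 2 * i + 1 <= n.*2.
Proof. rewrite -mul2n; lia. Qed.
Lemma bnd2 i : i < n -> 2 * i + 2 <= n.*2.
Proof. rewrite -mul2n; lia. Qed.

Lemma edges_ef : edges (friendship_adj n) = ef @: setT.
Proof.
apply/setP => e; rewrite inE; apply/idP/idP.
- move=> /existsP [u /existsP [v /andP [A /eqP ->]]].
  move: A; rewrite /friendship_adj => /andP [uv H].
  have caseA : forall (u v : V), u != v -> val u = 0 -> [set u; v] \in ef @: setT.
    move=> u' v' uv' u0.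
    have v0 : 0 < val v'.
      rewrite lt0n; apply/eqP => v0; move: uv'; rewrite -val_eqE u0 v0 eqxx //.
    have [hi hv] := vert_dec v0.
    have eu : u' = ord0 by apply: val_inj; rewrite u0.
    apply/imsetP.
    case oddv : (odd (val v').-1).
      exists (Ordinal hi, Ordinal (isT : 1 < 3)) => //=.
      rewrite eu; congr [set _; _]; apply: val_inj; rewrite inord_val //=; last first.
        first [exact: bnd1 hi | exact: bnd2 hi].
      by rewrite hv oddv; lia.
    exists (Ordinal hi, Ordinal (isT : 0 < 3)) => //=.
    rewrite eu; congr [set _; _]; apply: val_inj; rewrite inord_val //=; last first.
      first [exact: bnd1 hi | exact: bnd2 hi].
    by rewrite hv oddv; lia.
  case/or3P: H => [/eqP u0| /eqP v0 | /and3P [u0 v0 /eqP huv]].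
  + exact: caseA.
  + rewrite setUC; apply: caseA => //; by rewrite eq_sym.
  + have [hi hu] := vert_dec u0.
    have [_ hv] := vert_dec v0.
    apply/imsetP.
    have huv2 : odd (val u).-1 != odd (val v).-1.
      apply/negP => /eqP E; move: uv; rewrite -val_eqE hu hv huv E eqxx //.
    exists (Ordinal hi, Ordinal (isT : 2 < 3)) => //=.
    have ov : odd (val v).-1 = ~~ odd (val u).-1.
      by move: huv2; case: (odd _); case: (odd _).
    case ou : (odd (val u).-1) ov => ov.
    * rewrite setUC; congr [set _; _]; apply: val_inj; rewrite inord_val //=.
      - by rewrite /= in hv huv ov *; rewrite hv -huv ov; lia.
      - first [exact: bnd1 hi | exact: bnd2 hi].
      - by rewrite /= in hu ou *; rewrite hu ou; lia.
      - first [exact: bnd1 hi | exact: bnd2 hi].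
    * congr [set _; _]; apply: val_inj; rewrite inord_val //=.
      - by rewrite /= in hu ou *; rewrite hu ou; lia.
      - first [exact: bnd1 hi | exact: bnd2 hi].
      - by rewrite /= in hv huv ov *; rewrite hv -huv ov; lia.
      - first [exact: bnd1 hi | exact: bnd2 hi].
- move=> /imsetP [[[i hi] [k hk]] _ ->].
  have b1 : 2 * i + 1 <= n.*2 by rewrite -mul2n; lia.
  have b2 : 2 * i + 2 <= n.*2 by rewrite -mul2n; lia.
  apply/existsP; rewrite /ef /=.
  case: k hk => [|[|[|//]]] _ /=.
  + exists ord0; apply/existsP; exists (inord (2 * i + 1)); rewrite eqxx andbT.
    by rewrite /friendship_adj -val_eqE inord_val //= andbT; lia.
  + exists ord0; apply/existsP; exists (inord (2 * i + 2)); rewrite eqxx andbT.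
    by rewrite /friendship_adj -val_eqE inord_val //= andbT; lia.
  + exists (inord (2 * i + 1)); apply/existsP; exists (inord (2 * i + 2)).
    rewrite eqxx andbT /friendship_adj -val_eqE !inord_val //=.
    by apply/andP; split; [lia | apply/or3P; apply: Or33; apply/and3P; split; try lia; apply/eqP; rewrite !addn1 !addn2 /= -mul2n doubleK uphalf_double].
Qed.

Definition ea (x : 'I_n * 'I_3) := if val x.2 == 2 then 2 * val x.1 + 1 else 0.
Definition eb (x : 'I_n * 'I_3) := if val x.2 == 0 then 2 * val x.1 + 1 else 2 * val x.1 + 2.

Lemma ef_mem x (w : V) : (w \in ef x) = (val w == ea x) || (val w == eb x).
Proof.
case: x => [[i hi] [k hk]]; rewrite /ef /ea /eb /=.
have b1 := bnd1 hi; have b2 := bnd2 hi.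
case: k hk => [|[|[|//]]] _ /=; rewrite !inE -!val_eqE ?inord_val //.
Qed.

Lemma ea_le x : ea x <= n.*2.
Proof. case: x => [[i hi] [k hk]]; rewrite /ea /=; case: ifP => // _; exact: bnd1. Qed.
Lemma eb_le x : eb x <= n.*2.
Proof. case: x => [[i hi] [k hk]]; rewrite /eb /=; case: ifP => _; [exact: bnd1 | exact: bnd2]. Qed.

Lemma ef_inj : injective ef.
Proof.
move=> x y E.
have M : forall k, k <= n.*2 -> ((k == ea x) || (k == eb x)) = ((k == ea y) || (k == eb y)).
  move=> k kl; have := ef_mem x (inord k); rewrite E ef_mem inord_val //.
have Mxa := M _ (ea_le x); have Mxb := M _ (eb_le x).
have Mya := M _ (ea_le y); have Myb := M _ (eb_le y).
move: Mxa Mxb Mya Myb; clear E M; rewrite !eqxx /= ?orbT.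
case: x => [[i hi] [k hk]]; case: y => [[j hj] [l hl]]; rewrite /ea /eb /=.
move=> H1 H2 H3 H4.
have [ij kl] : i = j /\ k = l.
  case: k hk H1 H2 H3 H4 => [|[|[|//]]] _; case: l hl => [|[|[|//]]] _ /=;
  rewrite ?orbF ?orbT /= => H1 H2 H3 H4;
  repeat match goal with
  | H : is_true (_ || _) |- _ => move/orP: H => [] /eqP ?
  | H : is_true (_ == _) |- _ => move/eqP: H => ?
  | H : true = (_ || _) |- _ => move/esym/orP: H => [] /eqP ?
  | H : (_ || _) = true |- _ => move/orP: H => [] /eqP ?
  end; lia.
subst j l.
by congr (_, _); apply: val_inj.
Qed.
End Edges.
Arguments ef {n}.
Arguments bnd1 {n i}.
Arguments bnd2 {n i}.
Arguments inord_val {n k}.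
Arguments edges_ef {n}.
Arguments ef_inj {n}.

Lemma fE_lab m n T (a : 'Z_m) : 1 < m -> size T = n ->
  fE (friendship_adj n) (@labZ m n T) a = ct m a (Elist T).
Proof.
move=> m1 sT; rewrite /fE edges_ef.
set P := fun e : {set 'I_(n.*2.+1)} => (\sum_(v in e) @labZ m n T v)%R == a.
have -> : [set e in ef @: setT | P e] = ef @: [set x | P (ef x)].
  apply/setP => e; rewrite !inE; apply/andP/imsetP.
    by move=> [/imsetP [x _ ->] Px]; exists x; rewrite // inE.
  by move=> [x]; rewrite inE => Px ->; split => //; apply/imsetP; exists x.
rewrite card_imset; last exact: ef_inj.
pose H' (i : nat) := ((nth (0,0) T i).1 %% m == a) + ((nth (0,0) T i).2 %% m == a)
   + (((nth (0,0) T i).1 + (nth (0,0) T i).2) %% m == a).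
have Pef : forall (i : 'I_n) (k : 'I_3), P (ef (i, k)) =
    if val k == 0 then (nth (0,0) T i).1 %% m == a
    else if val k == 1 then (nth (0,0) T i).2 %% m == a
    else ((nth (0,0) T i).1 + (nth (0,0) T i).2) %% m == a.
  move=> [i hi] [k hk]; rewrite /P /ef /=.
  have b1 := bnd1 hi; have b2 := bnd2 hi.
  have l0 : @labZ m n T ord0 = 0%R by rewrite /labZ.
  have l1 : @labZ m n T (inord (2 * i + 1)) = ((nth (0,0) T i).1%:R)%R.
    by rewrite /labZ inord_val // lab_odd.
  have l2 : @labZ m n T (inord (2 * i + 2)) = ((nth (0,0) T i).2%:R)%R.
    by rewrite /labZ inord_val // lab_even.
  have ne : forall u v : 'I_(n.*2.+1), val u != val v ->
      (\sum_(w in [set u; v]) @labZ m n T w)%R = (@labZ m n T u + @labZ m n T v)%R.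
    move=> u v uv; rewrite big_setU1 /= ?big_set1 // inE.
    by apply: contra uv => /eqP ->.
  case: k hk => [|[|[|//]]] _ /=.
  - rewrite ne ?l0 ?l1 ?GRing.add0r ?Zp_nat_eq //= inord_val //; lia.
  - rewrite ne ?l0 ?l2 ?GRing.add0r ?Zp_nat_eq //= inord_val //; lia.
  - rewrite ne ?l1 ?l2 -?GRing.natrD ?Zp_nat_eq // !inord_val //; lia.
have -> : #|[set x | P (ef x)]| = \sum_(i < n) H' i.
  rewrite -sum1dep_card big_mkcond /=.
  rewrite (eq_bigr (fun p => (P (ef (p.1, p.2)) : nat))); last first.
    by move=> [i k] _; case: (P _).
  rewrite -(pair_bigA _ (fun i k => (P (ef (i, k)) : nat))) /=.
  apply: eq_bigr => i _.
  by rewrite !big_ord_recl big_ord0 !Pef /= addn0 /H' addnA.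
rewrite -(big_mkord (fun _ => true) H') /index_iota subn0.
rewrite /ct /Elist count_flatten -{1}(mkseq_nth (0,0) T) sT /mkseq -map_comp.
rewrite sumnE !big_map; apply: eq_bigr => i _ /=.
by rewrite /H' addn0 addnA.
Qed.

Lemma cordial_of_lists m n T : 1 < m -> size T = n ->
  mbal m (Vlist T) -> mbal m (Elist T) -> is_cordial 'Z_m (friendship_adj n).
Proof.
move=> m1 sT HV HE; exists (@labZ m n T) => a1 a2.
have bnd : forall a : 'Z_m, val a < m.
  by move=> a; rewrite -[m in _ < m](Zp_cast m1) ltn_ord.
rewrite !fV_lab // !fE_lab //.
by rewrite !HV ?HE ?bnd.
Qed.

Lemma map_iota_shift (f : nat -> nat) c n :
  (forall i, i < n -> f i = c + i) -> map f (iota 0 n) = iota c n.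
Proof.
move=> H; rewrite -[c]addn0 iotaDl; apply/eq_in_map => i.
by rewrite mem_iota add0n => /H.
Qed.

Lemma perm_rev_iota (f : nat -> nat) c n :
  (forall i, i < n -> f i = c + (n - 1 - i)) -> perm_eq (map f (iota 0 n)) (iota c n).
Proof.
move=> H.
suff -> : map f (iota 0 n) = rev (iota c n) by rewrite perm_rev.
elim: n f H => [|n IH] f H //=.
rewrite -[1]/(1 + 0) iotaDl -map_comp (IH (fun i => f i.+1)); last first.
  by move=> i ilt; rewrite /= H //; lia.
rewrite -[c :: iota c.+1 n]/(iota c n.+1) -addn1 iotaD rev_cat /= H //; congr (_ :: _); lia.
Qed.

Lemma ct_map_mod t q (f g : nat -> nat) n :
  (forall i, i < n -> f i %% t = g i %% t) ->
  ct t q (map f (iota 0 n)) = ct t q (map g (iota 0 n)).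
Proof.
by move=> H; apply: ct_eq_map => i; rewrite mem_iota add0n => /H.
Qed.

Definition lab3 e h := 3 * h + e.

Definition fam e1 e2 (H1 H2 : seq nat) :=
  [seq (lab3 e1 p.1, lab3 e2 p.2) | p <- zip H1 H2].

Lemma zip_map2 (f g : nat -> nat) (s : seq nat) :
  zip [seq f i | i <- s] [seq g i | i <- s] = [seq (f i, g i) | i <- s].
Proof. by elim: s => //= x s ->. Qed.

Lemma famV e1 e2 H1 H2 : size H1 = size H2 ->
  perm_eq (flatten [seq [:: p.1; p.2] | p <- fam e1 e2 H1 H2])
          (map (lab3 e1) H1 ++ map (lab3 e2) H2).
Proof.
elim: H1 H2 => [|x H1 IH] [|y H2] //= [sz].
apply/permP => P; rewrite /= !count_cat /=.
have := permP (IH _ sz) P; rewrite count_cat => ->.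
move: (P (lab3 e1 x)) (P (lab3 e2 y)) => [] [] /=; lia.
Qed.

Lemma famE e1 e2 H1 H2 : e1 < 3 -> e2 < 3 -> size H1 = size H2 ->
  perm_eq (flatten [seq [:: p.1; p.2; p.1 + p.2] | p <- fam e1 e2 H1 H2])
          (map (lab3 e1) H1 ++ map (lab3 e2) H2 ++
           map (lab3 ((e1 + e2) %% 3)) [seq p.1 + p.2 + (e1 + e2) %/ 3 | p <- zip H1 H2]).
Proof.
move=> e13 e23.
have S : forall x y, lab3 e1 x + lab3 e2 y = lab3 ((e1 + e2) %% 3) (x + y + (e1 + e2) %/ 3).
  move=> x y; rewrite /lab3; have := divn_eq (e1 + e2) 3; lia.
elim: H1 H2 => [|x H1 IH] [|y H2] //= [sz].
apply/permP => P; rewrite /= !count_cat /= S.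
have := permP (IH _ sz) P; rewrite !count_cat => ->.
move: (P (lab3 e1 x)) (P (lab3 e2 y)) (P (lab3 _ _)) => [] [] [] /=; lia.
Qed.

Section Construction.
Variables t r : nat.
Hypothesis ot : odd t.
Hypothesis rlt : r < 3 * t.

Definition u := r %/ 3.
Definition L := r - 2 * u.
Definition d := if t <= 2 * u then t else 0.
Definition ub := (2 * u - d) %/ 2.
Definition uc := (2 * u - d) - ub.
Definition ua := u - ub.
Definition ud := u - uc.
Definition G := 2 * t + ub.

Lemma t_half : t = 2 * t./2 + 1.
Proof. by have := odd_double_half t; rewrite ot -mul2n; lia. Qed.

Lemma params :
  [/\ 0 < t, u < t, u <= L <= u + 2, r = 2 * u + L &
   [/\ ua + ub = u, uc + ud = u, ua + ud = d, ub + uc <= t.-1 &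
   [/\ 2 * ub < t, 2 * uc < t, (d == 0) || (d == t) & 2 * u + 1 = d + (uc + ub) + 1]]].
Proof.
have th := t_half.
have e3 : r = 3 * u + r %% 3 by rewrite /u mulnC -divn_eq.
have r3 : r %% 3 < 3 by rewrite ltn_mod.
have ut : u < t by rewrite /u ltn_divLR // mulnC.
rewrite /L /ua /ud /uc /ub /d; case: ifP => h; (repeat split); rewrite ?eqxx ?orbT; lia.
Qed.

Definition A0 := [seq 2 * (t - 1 - i) + 1 | i <- iota 0 ua].
Definition Ba := [seq G - ua + i | i <- iota 0 ua].
Definition B0 := [seq 2 * (t + i) + 1 | i <- iota 0 ub].
Definition Bb := [seq G + L + ub - 1 - i | i <- iota 0 ub].
Definition C0 := [seq 2 * (t - 1 - i) + 1 | i <- iota 0 uc].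
Definition Bc := [seq G - uc + i | i <- iota 0 uc].
Definition D0 := [seq 2 * (t + i) + 1 | i <- iota 0 ud].
Definition Bd := [seq G + L + ud - 1 - i | i <- iota 0 ud].
Definition P12 := [seq G + j | j <- iota 0 L].

Definition Trem := fam 1 2 P12 P12 ++ fam 0 1 A0 Ba ++ fam 0 1 B0 Bb ++
                   fam 0 2 C0 Bc ++ fam 0 2 D0 Bd.

Lemma size_fam e1 e2 H1 H2 : size H1 = size H2 -> size (fam e1 e2 H1 H2) = size H1.
Proof. by move=> sz; rewrite /fam size_map size_zip sz minnn. Qed.

Lemma size_Trem : size Trem = r.
Proof.
have [_ _ _ er [e1 e2 _ _ _]] := params.
rewrite /Trem !size_cat !size_fam ?size_map ?size_iota //; lia.
Qed.

Definition S12 := [seq p.1 + p.2 + 1 | p <- zip P12 P12].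
Definition Sa := [seq p.1 + p.2 + 0 | p <- zip A0 Ba].
Definition Sb := [seq p.1 + p.2 + 0 | p <- zip B0 Bb].
Definition Sc := [seq p.1 + p.2 + 0 | p <- zip C0 Bc].
Definition Sd := [seq p.1 + p.2 + 0 | p <- zip D0 Bd].

Definition S0V := 0 :: (A0 ++ B0 ++ C0 ++ D0).
Definition S1V := P12 ++ Ba ++ Bb.
Definition S2V := P12 ++ Bc ++ Bd.
Definition S0E := A0 ++ B0 ++ C0 ++ D0 ++ S12.
Definition S1E := P12 ++ Ba ++ Bb ++ Sa ++ Sb.
Definition S2E := P12 ++ Bc ++ Bd ++ Sc ++ Sd.

Lemma sA : size A0 = size Ba. Proof. by rewrite !size_map. Qed.
Lemma sB : size B0 = size Bb. Proof. by rewrite !size_map. Qed.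
Lemma sC : size C0 = size Bc. Proof. by rewrite !size_map. Qed.
Lemma sD : size D0 = size Bd. Proof. by rewrite !size_map. Qed.

Lemma Vperm : perm_eq (Vlist Trem)
  (map (lab3 0) S0V ++ map (lab3 1) S1V ++ map (lab3 2) S2V).
Proof.
apply/permP => P.
rewrite /Vlist /Trem !map_cat !flatten_cat /= !count_cat.
rewrite (permP (famV 1 2 (erefl (size P12))) P) (permP (famV 0 1 sA) P).
rewrite (permP (famV 0 1 sB) P) (permP (famV 0 2 sC) P).
rewrite (permP (famV 0 2 sD) P).
rewrite /S0V /S1V /S2V /= !map_cat !count_cat.
have -> : lab3 0 0 = 0 by [].
lia.
Qed.

Definition Eflat T := flatten [seq [:: p.1; p.2; p.1 + p.2] | p <- T].

Lemma famE12 : perm_eq (Eflat (fam 1 2 P12 P12))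
  (map (lab3 1) P12 ++ map (lab3 2) P12 ++ map (lab3 0) S12).
Proof. exact: (@famE 1 2 P12 P12 isT isT (erefl _)). Qed.
Lemma famEa : perm_eq (Eflat (fam 0 1 A0 Ba))
  (map (lab3 0) A0 ++ map (lab3 1) Ba ++ map (lab3 1) Sa).
Proof. exact: (@famE 0 1 A0 Ba isT isT sA). Qed.
Lemma famEb : perm_eq (Eflat (fam 0 1 B0 Bb))
  (map (lab3 0) B0 ++ map (lab3 1) Bb ++ map (lab3 1) Sb).
Proof. exact: (@famE 0 1 B0 Bb isT isT sB). Qed.
Lemma famEc : perm_eq (Eflat (fam 0 2 C0 Bc))
  (map (lab3 0) C0 ++ map (lab3 2) Bc ++ map (lab3 2) Sc).
Proof. exact: (@famE 0 2 C0 Bc isT isT sC). Qed.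
Lemma famEd : perm_eq (Eflat (fam 0 2 D0 Bd))
  (map (lab3 0) D0 ++ map (lab3 2) Bd ++ map (lab3 2) Sd).
Proof. exact: (@famE 0 2 D0 Bd isT isT sD). Qed.

Lemma Eperm : perm_eq (Elist Trem)
  (map (lab3 0) S0E ++ map (lab3 1) S1E ++ map (lab3 2) S2E).
Proof.
apply/permP => P.
rewrite /Elist /Trem !map_cat !flatten_cat !count_cat.
rewrite -!/(Eflat _).
rewrite (permP famE12 P) (permP famEa P) (permP famEb P) (permP famEc P) (permP famEd P).
rewrite /S0E /S1E /S2E ?map_cat ?count_cat.
lia.
Qed.

Definition map21 := map (fun x => 2 * x + 1).

Lemma Ba_iota : Ba = iota (G - ua) ua.
Proof. by apply: map_iota_shift. Qed.
Lemma Bc_iota : Bc = iota (G - uc) uc.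
Proof. by apply: map_iota_shift. Qed.
Lemma P12_iota : P12 = iota G L.
Proof. by apply: map_iota_shift. Qed.
Lemma Bb_perm : perm_eq Bb (iota (G + L) ub).
Proof. by apply: perm_rev_iota => i ilt; lia. Qed.
Lemma Bd_perm : perm_eq Bd (iota (G + L) ud).
Proof. by apply: perm_rev_iota => i ilt; lia. Qed.

Lemma ua_le : ua <= t.
Proof. have [_ ut _ _ [e1 _ _ _ _]] := params; lia. Qed.
Lemma uc_le : uc <= t.
Proof. have [_ ut _ _ [_ e2 _ _ _]] := params; lia. Qed.

Lemma A0_perm : perm_eq A0 (map21 (iota (t - ua) ua)).
Proof.
rewrite /A0 /map21 (_ : [seq _ | i <- iota 0 ua] = map (fun x => 2 * x + 1) [seq t - 1 - i | i <- iota 0 ua]); last by rewrite -map_comp.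
by apply: perm_map; apply: perm_rev_iota => i ilt; have := ua_le; lia.
Qed.
Lemma C0_perm : perm_eq C0 (map21 (iota (t - uc) uc)).
Proof.
rewrite /C0 /map21 (_ : [seq _ | i <- iota 0 uc] = map (fun x => 2 * x + 1) [seq t - 1 - i | i <- iota 0 uc]); last by rewrite -map_comp.
by apply: perm_map; apply: perm_rev_iota => i ilt; have := uc_le; lia.
Qed.
Lemma B0_iota : B0 = map21 (iota t ub).
Proof.
rewrite /B0 /map21 -(@map_iota_shift (fun i => t + i) t ub) // -map_comp.
by apply: eq_map.
Qed.
Lemma D0_iota : D0 = map21 (iota t ud).
Proof.
rewrite /D0 /map21 -(@map_iota_shift (fun i => t + i) t ud) // -map_comp.
by apply: eq_map.
Qed.

Lemma mod2t x : (2 * t + x) %% t = x %% t.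
Proof. by rewrite modnMDl. Qed.

Lemma S12_ct q : ct t q S12 = ct t q (map21 (iota (t + ub) L)).
Proof.
rewrite /S12 /P12 zip_map2 -map_comp /map21.
rewrite -(@map_iota_shift (fun i => (t + ub) + i) (t + ub) L) // -map_comp.
apply: ct_map_mod => i ilt /=.
rewrite -[in RHS]mod2t /G; congr (_ %% _); lia.
Qed.

Lemma Sa_ct q : ct t q Sa = ct t q (iota (G - 2 * ua) ua).
Proof.
rewrite /Sa /A0 /Ba zip_map2 -map_comp.
rewrite (@ct_map_mod t q _ (fun i => G - 2 * ua + (ua - 1 - i))); last first.
  move=> i ilt /=; rewrite -[in RHS]mod2t; congr (_ %% _); have := ua_le; rewrite /G; lia.
by apply: ct_perm; apply: perm_rev_iota.
Qed.
Lemma Sc_ct q : ct t q Sc = ct t q (iota (G - 2 * uc) uc).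
Proof.
rewrite /Sc /C0 /Bc zip_map2 -map_comp.
rewrite (@ct_map_mod t q _ (fun i => G - 2 * uc + (uc - 1 - i))); last first.
  move=> i ilt /=; rewrite -[in RHS]mod2t; congr (_ %% _); have := uc_le; rewrite /G; lia.
by apply: ct_perm; apply: perm_rev_iota.
Qed.
Lemma Sb_ct q : ct t q Sb = ct t q (iota (G + L + ub) ub).
Proof.
rewrite /Sb /B0 /Bb zip_map2 -map_comp.
rewrite (@ct_map_mod t q _ (fun i => G + L + ub + i)); last first.
  move=> i ilt /=; rewrite -[in RHS]mod2t; congr (_ %% _); lia.
by rewrite (@map_iota_shift (fun i => G + L + ub + i) (G + L + ub) ub).
Qed.
Lemma Sd_ct q : ct t q Sd = ct t q (iota (G + L + ud) ud).
Proof.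
rewrite /Sd /D0 /Bd zip_map2 -map_comp.
rewrite (@ct_map_mod t q _ (fun i => G + L + ud + i)); last first.
  move=> i ilt /=; rewrite -[in RHS]mod2t; congr (_ %% _); lia.
by rewrite (@map_iota_shift (fun i => G + L + ud + i) (G + L + ud) ud).
Qed.

Lemma G_ge : 2 * ua <= G /\ 2 * uc <= G.
Proof. have := ua_le; have := uc_le; rewrite /G; lia. Qed.

Lemma tight_S1V : tight t (u + L) S1V.
Proof.
have [t0 _ _ _ [e1 _ _ _ _]] := params; have [g1 _] := G_ge.
apply: (@tight_perm t (u + L) S1V (iota (G - ua) (u + L))); last exact: tight_iota.
rewrite (_ : u + L = ua + (L + ub)); last lia.
rewrite !iotaD (_ : G - ua + ua = G); last lia.
rewrite /S1V P12_iota Ba_iota; apply/permP => P.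
rewrite !count_cat (permP Bb_perm); lia.
Qed.

Lemma tight_S2V : tight t (u + L) S2V.
Proof.
have [t0 _ _ _ [_ e2 _ _ _]] := params; have [_ g2] := G_ge.
apply: (@tight_perm t (u + L) S2V (iota (G - uc) (u + L))); last exact: tight_iota.
rewrite (_ : u + L = uc + (L + ud)); last lia.
rewrite !iotaD (_ : G - uc + uc = G); last lia.
rewrite /S2V P12_iota Bc_iota; apply/permP => P.
rewrite !count_cat (permP Bd_perm); lia.
Qed.

Lemma tight_S1E : tight t (2 * u + L) S1E.
Proof.
have [t0 _ _ _ [e1 _ _ _ _]] := params; have [g1 _] := G_ge.
apply: (@tight_ct t (2 * u + L) S1E (iota (G - 2 * ua) (2 * u + L))); last exact: tight_iota.
move=> q qt.
rewrite (_ : 2 * u + L = ua + (ua + (L + (ub + ub)))); last lia.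
rewrite !iotaD (_ : G - 2 * ua + ua = G - ua); last lia.
rewrite (_ : G - ua + ua = G); last lia.
rewrite /S1E !ct_cat P12_iota Ba_iota (ct_perm t q Bb_perm) Sa_ct Sb_ct; lia.
Qed.

Lemma tight_S2E : tight t (2 * u + L) S2E.
Proof.
have [t0 _ _ _ [_ e2 _ _ _]] := params; have [_ g2] := G_ge.
apply: (@tight_ct t (2 * u + L) S2E (iota (G - 2 * uc) (2 * u + L))); last exact: tight_iota.
move=> q qt.
rewrite (_ : 2 * u + L = uc + (uc + (L + (ud + ud)))); last lia.
rewrite !iotaD (_ : G - 2 * uc + uc = G - uc); last lia.
rewrite (_ : G - uc + uc = G); last lia.
rewrite /S2E !ct_cat P12_iota Bc_iota (ct_perm t q Bd_perm) Sc_ct Sd_ct; lia.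
Qed.

Definition W := map21 (iota (t - uc) (uc + ub)).
Definition F := map21 (iota (t - ua) (ua + ud)).

Lemma CB_perm : perm_eq (C0 ++ B0) W.
Proof.
rewrite /W iotaD (_ : t - uc + uc = t); last by have := uc_le; lia.
by rewrite /map21 map_cat B0_iota; apply: perm_cat => //; exact: C0_perm.
Qed.

Lemma AD_perm : perm_eq (A0 ++ D0) F.
Proof.
rewrite /F iotaD (_ : t - ua + ua = t); last by have := ua_le; lia.
by rewrite /map21 map_cat D0_iota; apply: perm_cat => //; exact: A0_perm.
Qed.

Lemma W_nz x : x \in W -> x %% t != 0.
Proof.
have [t0 _ _ _ [_ _ _ _ [h1 h2 _ _]]] := params; have := uc_le.
rewrite /W /map21 => ucl /mapP [y]; rewrite mem_iota => /andP [y1 y2] ->.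
apply/negP => /eqP H.
have := divn_eq (2 * y + 1) t; rewrite H addn0.
case: ((2 * y + 1) %/ t) => [|[|[|k]]] E; rewrite ?mul0n ?mul1n ?mulSn in E; lia.
Qed.

Lemma tight_W : tight t (uc + ub) W.
Proof.
have [t0 _ _ _ _] := params.
by apply: tight_map21 => //; apply: tight_iota.
Qed.

Lemma ct0W_le1 q : q < t -> ct t q (0 :: W) <= 1.
Proof.
move=> qt; have [t0 _ _ _ [_ _ _ e4 _]] := params.
rewrite /ct /= mod0n.
have le1 : ct t q W <= 1.
  have /andP [_ H] := tight_W qt.
  apply: (leq_trans H); rewrite -ltnS ltn_divLR //.
  by move: e4 t0; case: (t) => // t' e4' _ /=; lia.
case: (eqVneq 0 q) => [<-|nq].
  suff -> : count (fun x => x %% t == 0) W = 0 by [].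
  apply/eqP; rewrite -leqn0 leqNgt -has_count; apply/hasPn => x /W_nz.
  by rewrite /=.
by rewrite add0n.
Qed.

Lemma tight_0W : tight t (size (0 :: W)) (0 :: W).
Proof.
have [t0 _ _ _ [_ _ _ e4 _]] := params.
apply: tight_le1 => //; first exact: ct0W_le1.
rewrite /= /W /map21 size_map size_iota.
by move: e4 t0; case: (t) => // t' e4' _ /=; lia.
Qed.

Lemma size_0W : size (0 :: W) = 1 + (uc + ub).
Proof. by rewrite /W /map21 /= size_map size_iota. Qed.

Lemma tight_S0V : tight t (2 * u + 1) S0V.
Proof.
have [t0 _ _ _ [e1 e2 e3 e4 [_ _ dd f4]]] := params.
apply: (@tight_perm t _ S0V ((0 :: W) ++ F)).
  apply/permP => P; rewrite /S0V /= !count_cat.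
  rewrite -(permP CB_perm P) -(permP AD_perm P) !count_cat; move: (P 0) => [] /=; lia.
case/orP: dd => /eqP dd.
  have -> : F = [::] by rewrite /F e3 dd.
  rewrite cats0; have := tight_0W; rewrite size_0W.
  by rewrite (_ : 1 + (uc + ub) = 2 * u + 1) //; lia.
rewrite (_ : 2 * u + 1 = size (0 :: W) + t); last by rewrite size_0W; lia.
apply: tight_cat_full => //; first exact: tight_0W.
by rewrite /F e3 dd; apply: tight_map21 => //; apply: tight_iota.
Qed.

Lemma tight_S0E : tight t (2 * u + L) S0E.
Proof.
have [t0 _ _ _ [e1 e2 e3 e4 [_ _ dd f4]]] := params.
set W' := map21 (iota (t - uc) (uc + ub + L)).
have tW' : tight t (uc + ub + L) W' by apply: tight_map21 => //; apply: tight_iota.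
have E : forall q, q < t -> ct t q S0E = ct t q (W' ++ F).
  move=> q qt.
  rewrite /S0E !ct_cat -(ct_perm t q AD_perm) ct_cat.
  rewrite /W' (_ : uc + ub + L = uc + (ub + L)); last lia.
  rewrite !iotaD (_ : t - uc + uc = t); last by have := uc_le; lia.
  rewrite /map21 !map_cat !ct_cat B0_iota (ct_perm t q C0_perm) S12_ct /map21; lia.
apply: (tight_ct E).
case/orP: dd => /eqP dd.
  have -> : F = [::] by rewrite /F e3 dd.
  by rewrite cats0 (_ : 2 * u + L = uc + ub + L) //; lia.
rewrite (_ : 2 * u + L = (uc + ub + L) + t); last lia.
apply: tight_cat_full => //.
by rewrite /F e3 dd; apply: tight_map21 => //; apply: tight_iota.
Qed.

Lemma mbal_V : mbal (3 * t) (Vlist Trem).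
Proof.
have [t0 _ uL _ _] := params.
have P : perm_eq (map (lab3 0) S0V ++ map (lab3 1) S1V ++ map (lab3 2) S2V) (Vlist Trem).
  by rewrite perm_sym Vperm.
apply: (mbal_perm P).
apply: (mbal_classes t0 tight_S0V tight_S1V tight_S2V); lia.
Qed.

Lemma mbal_E : mbal (3 * t) (Elist Trem).
Proof.
have [t0 _ uL _ _] := params.
have P : perm_eq (map (lab3 0) S0E ++ map (lab3 1) S1E ++ map (lab3 2) S2E) (Elist Trem).
  by rewrite perm_sym Eperm.
apply: (mbal_perm P).
apply: (mbal_classes t0 tight_S0E tight_S1E tight_S2E); lia.
Qed.

End Construction.

Definition Vflat (T : seq (nat * nat)) := flatten [seq [:: p.1; p.2] | p <- T].

Lemma Vflat_cat X Y : Vflat (X ++ Y) = Vflat X ++ Vflat Y.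
Proof. by rewrite /Vflat map_cat flatten_cat. Qed.
Lemma Eflat_cat X Y : Eflat (X ++ Y) = Eflat X ++ Eflat Y.
Proof. by rewrite /Eflat map_cat flatten_cat. Qed.

Definition Bk m := [seq (x, x) | x <- iota 0 m].

Lemma ct_Vflat_Bk m a : 0 < m -> a < m -> ct m a (Vflat (Bk m)) = 2.
Proof.
move=> m0 am.
have -> : ct m a (Vflat (Bk m)) = ct m a (iota 0 m) + ct m a (iota 0 m).
  rewrite /Vflat /Bk; elim: (iota 0 m) => //= x s IH.
  by rewrite /ct /= -/(ct m a _) IH /ct /=; case: (x %% m == a) => /=; lia.
by rewrite ct_iota_full.
Qed.

Lemma ct_Eflat_Bk m a : odd m -> a < m -> ct m a (Eflat (Bk m)) = 3.
Proof.
move=> om am; have m0 : 0 < m by case: m om am.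
have -> : ct m a (Eflat (Bk m)) = ct m a (iota 0 m) + ct m a (iota 0 m)
    + ct m a (map (fun x => 2 * x + 0) (iota 0 m)).
  rewrite /Eflat /Bk; elim: (iota 0 m) => //= x s IH.
  rewrite /ct /= -!/(ct m a _) IH /ct /= (_ : x + x = 2 * x + 0); last lia.
  by case: (x %% m == a); case: (_ %% m == a) => /=; lia.
by rewrite ct_map21 // !ct_iota_full // ltn_pmod.
Qed.

Lemma ct_flatten_nseq (f : seq (nat * nat) -> seq nat) m a Q B :
  (forall X Y, f (X ++ Y) = f X ++ f Y) -> f [::] = [::] ->
  ct m a (f (flatten (nseq Q B))) = Q * ct m a (f B).
Proof.
move=> fc f0; elim: Q => [|Q IH] /=; first by rewrite f0.
by rewrite fc ct_cat IH mulSn.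
Qed.

Theorem corollary12p3 (m : nat) (hm1 : (1 <= m)%N) (hodd : odd m) (h3 : (3 %| m)%N) :
  forall n : nat, is_cordial 'Z_m (friendship_adj n).
Proof.
move=> n.
set t := m %/ 3.
have mt : m = 3 * t by rewrite /t mulnC divnK.
have ot : odd t by move: hodd; rewrite mt oddM => /andP [].
have m1 : 1 < m by move: hm1; rewrite mt; case: (t) ot => // t' _; lia.
have m0 : 0 < m by lia.
set Q := n %/ m; set r := n %% m.
have rlt : r < 3 * t by rewrite -mt ltn_pmod.
pose T := flatten (nseq Q (Bk m)) ++ Trem t r.
apply: (@cordial_of_lists m n T m1).
- rewrite size_cat size_Trem // size_flatten.
  have -> : shape (nseq Q (Bk m)) = nseq Q m by rewrite /shape map_nseq size_map size_iota.
  rewrite sumn_nseq /Q /r [in RHS](divn_eq n m); lia.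
- have -> : Vlist T = 0 :: Vflat (flatten (nseq Q (Bk m))) ++ Vflat (Trem t r).
    by rewrite /Vlist /T -/(Vflat _) Vflat_cat.
  apply: (@mbal_perm _ (Vflat (flatten (nseq Q (Bk m))) ++ Vlist (Trem t r))).
    by apply/permP => P; rewrite /Vlist /= !count_cat /= -/(Vflat _); move: (P 0) => [] /=; lia.
  apply: (@mbal_full _ _ _ (Q * 2)).
    move=> a am; rewrite (@ct_flatten_nseq Vflat) ?ct_Vflat_Bk //.
    exact: Vflat_cat.
  by rewrite mt; apply: mbal_V.
- rewrite /Elist -/(Eflat _) /T Eflat_cat.
  apply: (@mbal_full _ _ _ (Q * 3)).
    move=> a am; rewrite (@ct_flatten_nseq Eflat) ?ct_Eflat_Bk //.
    exact: Eflat_cat.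
  by rewrite mt; apply: mbal_E.
Qed.
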